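(* Let $\mathbb K$ be a field of characteristic $\ne2$, $D\in\mathbb K[X]$ non-square of even degree with leading coefficient a square, and $\sqrt D\in\mathbb K((X^{-1}))$ fixed. Let $\alpha\in\mathbb K(X,\sqrt D)\subset\mathbb K((X^{-1}))$ be $\sigma$-reduced with $\alpha+\sigma(\alpha)\in\mathbb K[X]$. If the continued fraction of $\alpha$ is quasi-periodic, then it is pure periodic, i.e. there is $l\ge1$ with $a_n=a_{n+l}$ for all $n\ge0$.
   Context: $\operatorname{ord}$ is the valuation on $\mathbb K((X^{-1}))$ with $\operatorname{ord}(\sum_{n\le N}t_nX^n)=-N$ if $t_N\ne0$; $\lfloor\beta\rfloor$ is the unique polynomial with $\operatorname{ord}(\beta-\lfloor\beta\rfloor)>0$. Continued fraction: $\alpha_0=\alpha$, $\alpha_{n+1}=1/(\alpha_n-\lfloor\alpha_n\rfloor)$, $a_n=\lfloor\alpha_n\rfloor$. $\sigma$ is the nontrivial $\mathbb K(X)$-automorphism of $\mathbb K(X,\sqrt D)$, $\sigma(\sqrt D)=-\sqrt D$. An element $\alpha\in\mathbb K(X,\sqrt D)$ is $\sigma$-reduced if $\operatorname{ord}(\sigma(\alpha))>0>\operatorname{ord}(\alpha)$. Quasi-periodic: there exist $m\ge0$, $l\ge1$, $\mu\in\mathbb K^*$ with $a_n=\mu^{(-1)^n}a_{n+l}$ for all $n\ge m$. *)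

(* Defs.v *)
From HB Require Import structures.
From mathcomp Require Import all_boot all_order all_algebra.
Set Implicit Arguments. Unset Strict Implicit. Unset Printing Implicit Defensive.
Import Order.TTheory GRing.Theory Num.Theory.
Local Open Scope ring_scope.

(* Laurent series in X^{-1} over K:  a series is a pair (k, g) denoting
   sum_{i >= 0} g i * X^(k - i). *)
Record LS (K : fieldType) := MkLS { ls_top : int; ls_g : nat -> K }.

Section Laurent.
Variable K : fieldType.

Definition ls_coef (s : LS K) (m : int) : K :=
  if m <= ls_top s then ls_g s `|ls_top s - m|%N else 0.

Definition ls_eq (s t : LS K) : Prop := forall m : int, ls_coef s m = ls_coef t m.

Definition ls_add (s t : LS K) : LS K :=
  let M := Num.max (ls_top s) (ls_top t) in
  MkLS M (fun i => ls_coef s (M - i%:Z) + ls_coef t (M - i%:Z)).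

Definition ls_opp (s : LS K) : LS K := MkLS (ls_top s) (fun i => - ls_g s i).

Definition ls_sub (s t : LS K) : LS K := ls_add s (ls_opp t).

Definition ls_mul (s t : LS K) : LS K :=
  MkLS (ls_top s + ls_top t)
       (fun n => \sum_(i < n.+1) ls_g s i * ls_g t (n - i)).

Definition ls_poly (p : {poly K}) : LS K :=
  MkLS (size p)%:Z (fun i => if (i <= size p)%N then p`_(size p - i) else 0).

Definition ls_one : LS K := ls_poly 1.

(* ord s > 0  (with ord 0 = +oo): no monomial X^m with m >= 0 *)
Definition ord_pos (s : LS K) : Prop := forall m : int, 0 <= m -> ls_coef s m = 0.
(* ord s < 0 : some monomial X^m with m > 0 has a nonzero coefficient *)
Definition ord_neg (s : LS K) : Prop := exists m : int, 0 < m /\ ls_coef s m != 0.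

Definition ls_is_poly (s : LS K) : Prop := exists p : {poly K}, ls_eq s (ls_poly p).

(* alpha lies in K(X, sqrtD) and beta = sigma(alpha): alpha = (p + q sqrtD)/r,
   beta = (p - q sqrtD)/r *)
Definition sigma_conj (sqrtD alpha beta : LS K) : Prop :=
  exists p q r : {poly K}, r != 0 /\
    ls_eq (ls_mul (ls_poly r) alpha) (ls_add (ls_poly p) (ls_mul (ls_poly q) sqrtD)) /\
    ls_eq (ls_mul (ls_poly r) beta) (ls_sub (ls_poly p) (ls_mul (ls_poly q) sqrtD)).

Definition is_floor (beta : LS K) (p : {poly K}) : Prop :=
  ord_pos (ls_sub beta (ls_poly p)).

(* A = (alpha_n), a = (a_n) is the continued fraction expansion of alpha:
   alpha_0 = alpha, a_n = floor alpha_n, alpha_{n+1} = 1/(alpha_n - a_n) *)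
Definition cf_expansion (alpha : LS K) (A : nat -> LS K) (a : nat -> {poly K}) : Prop :=
  ls_eq (A 0%N) alpha /\
  (forall n, is_floor (A n) (a n)) /\
  (forall n, ls_eq (ls_mul (ls_sub (A n) (ls_poly (a n))) (A n.+1)) ls_one).

(* quasi-periodicity: a_n = mu^((-1)^n) a_{n+l} for n >= m *)
Definition quasi_periodic (a : nat -> {poly K}) : Prop :=
  exists (m l : nat) (mu : K), (0 < l)%N /\ mu != 0 /\
    forall n, (m <= n)%N ->
      a n = (if odd n then mu^-1 else mu) *: a (n + l)%N.

Definition pure_periodic (a : nat -> {poly K}) : Prop :=
  exists l : nat, (0 < l)%N /\ forall n, a n = a (n + l)%N.

End Laurent.

(* Main.v *)
Require Import Defs.
From HB Require Import structures.
From mathcomp Require Import all_boot all_order all_algebra zify.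
From Stdlib Require Import Setoid Ring Classical.
Import GRing.Theory Num.Theory Order.TTheory.
Local Open Scope ring_scope.
Set Implicit Arguments. Unset Strict Implicit.

Section LSTheory.
Variable K : fieldType.
Local Notation LS := (LS K).
Local Notation cf := (@ls_coef K).

Lemma cf_top (s : LS) m : ls_top s < m -> cf s m = 0.
Proof. by rewrite /ls_coef leNgt => ->. Qed.

Lemma cf_g (s : LS) (i : nat) : cf s (ls_top s - i%:Z) = ls_g s i.
Proof.
rewrite /ls_coef ifT; last by lia.
congr ls_g; lia.
Qed.

Lemma cf_add (s t : LS) m : cf (ls_add s t) m = cf s m + cf t m.
Proof.
rewrite /ls_add /ls_coef /=.
case: ifP => h.
  have -> : Num.max (ls_top s) (ls_top t) - `|Num.max (ls_top s) (ls_top t) - m|%N%:Z = m by lia.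
  by rewrite /ls_coef.
have e1 : (m <= ls_top s) = false by lia.
have e2 : (m <= ls_top t) = false by lia.
by rewrite e1 e2 addr0.
Qed.

Lemma cf_opp (s : LS) m : cf (ls_opp s) m = - cf s m.
Proof. by rewrite /ls_coef /=; case: ifP; rewrite ?oppr0. Qed.

Lemma cf_poly (p : {poly K}) m : cf (ls_poly p) m = if 0 <= m then p`_`|m|%N else 0.
Proof.
rewrite /ls_coef /=.
case: ifP => h1; case: ifP => h2.
- rewrite ifT; last by lia. congr (p`_ _); lia.
- rewrite ifF //; lia.
- rewrite nth_default //; lia.
- by [].
Qed.

Definition wsum (F : int -> K) (B : int) (N : nat) := \sum_(i < N) F (B - i%:Z).
Definition supp (F : int -> K) (B : int) (N : nat) :=
  forall x : int, ~~ ((B - N%:Z < x) && (x <= B)) -> F x = 0.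

Lemma wsum_sub (F : int -> K) (B1 : int) (N1 : nat) (B2 : int) (N2 : nat) : supp F B1 N1 -> B1 <= B2 -> B2 - N2%:Z <= B1 - N1%:Z ->
  wsum F B1 N1 = wsum F B2 N2.
Proof.
move=> H h1 h2.
set k := `|B2 - B1|%N. set r := `|((B1 - N1%:Z) - (B2 - N2%:Z))%R|%N.
have eN : N2 = (k + (N1 + r))%N by lia.
rewrite /wsum eN big_split_ord big_split_ord /=.
rewrite [X in _ = X + _]big1 ?add0r; last first.
  move=> i _; apply: H; have := ltn_ord i; rewrite /k /r; lia.
rewrite [X in _ = _ + X]big1 ?addr0; last first.
  move=> i _; apply: H; have := ltn_ord i; rewrite /k /r; lia.
apply eq_bigr => i _; congr F; rewrite /k; lia.
Qed.

Lemma wsum_eq (F : int -> K) (B1 : int) (N1 : nat) (B2 : int) (N2 : nat) : supp F B1 N1 -> supp F B2 N2 ->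
  wsum F B1 N1 = wsum F B2 N2.
Proof.
move=> H1 H2.
set B := Num.max B1 B2.
set N := `|(B - Num.min (B1 - N1%:Z) (B2 - N2%:Z))%R|%N.
rewrite (@wsum_sub F B1 N1 B N) //; try lia.
by rewrite (@wsum_sub F B2 N2 B N) //; lia.
Qed.

Lemma supp_mono (F : int -> K) (B1 : int) (N1 : nat) (B2 : int) (N2 : nat) : supp F B1 N1 -> B1 <= B2 -> B2 - N2%:Z <= B1 - N1%:Z ->
  supp F B2 N2.
Proof. move=> H h1 h2 x hx; apply: H; lia. Qed.

Definition pf (s t : LS) (m : int) := fun x => cf s x * cf t (m - x).

Lemma cf_mul_base (s t : LS) m :
  cf (ls_mul s t) m = wsum (pf s t m) (ls_top s) `|(ls_top s + ls_top t - m)%R|%N.+1.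
Proof.
rewrite {1}/ls_coef /wsum /pf /=.
case: ifP => h.
  apply eq_bigr => i _.
  rewrite -(cf_g s i); congr (_ * _).
  have hi := ltn_ord i.
  rewrite /ls_coef ifT; last by lia.
  congr ls_g. move: (ls_top s) (ls_top t) (nat_of_ord i) h hi => a b j h1 h2. lia.
rewrite big1 // => i _.
rewrite (@cf_top t); last by (have := ltn_ord i; lia).
by rewrite mulr0.
Qed.

Lemma supp_pf (s t : LS) m B N : ls_top s <= B -> B - N%:Z < m - ls_top t -> supp (pf s t m) B N.
Proof.
move=> h1 h2 x hx; rewrite /pf.
case: (boolP (x <= B)) => hxB.
  rewrite (@cf_top t) ?mulr0 //; lia.
rewrite cf_top ?mul0r //; lia.
Qed.

Lemma cf_mul (s t : LS) m B N : supp (pf s t m) B N ->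
  cf (ls_mul s t) m = wsum (pf s t m) B N.
Proof.
move=> H; rewrite cf_mul_base; apply: wsum_eq => //.
apply: supp_pf; lia.
Qed.

Lemma supp_ext F G B N : F =1 G -> supp F B N -> supp G B N.
Proof. by move=> e H x hx; rewrite -e H. Qed.

Lemma wsum_ext F G B N : F =1 G -> wsum F B N = wsum G B N.
Proof. by move=> e; apply eq_bigr => i _; rewrite e. Qed.

Lemma ls_eq_refl (s : LS) : ls_eq s s. Proof. by []. Qed.
Lemma ls_eq_sym (s t : LS) : ls_eq s t -> ls_eq t s. Proof. by move=> h m. Qed.
Lemma ls_eq_trans (s t u : LS) : ls_eq s t -> ls_eq t u -> ls_eq s u.
Proof. by move=> h1 h2 m; rewrite h1 h2. Qed.

Add Parametric Relation : LS (@ls_eq K)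
  reflexivity proved by ls_eq_refl
  symmetry proved by ls_eq_sym
  transitivity proved by ls_eq_trans as ls_eq_rel.

Add Parametric Morphism : (@ls_add K) with signature
  (@ls_eq K) ==> (@ls_eq K) ==> (@ls_eq K) as ls_add_mor.
Proof. by move=> s s' h t t' h' m; rewrite !cf_add h h'. Qed.

Add Parametric Morphism : (@ls_opp K) with signature
  (@ls_eq K) ==> (@ls_eq K) as ls_opp_mor.
Proof. by move=> s s' h m; rewrite !cf_opp h. Qed.

Lemma pf_ext (s s' t t' : LS) m : ls_eq s s' -> ls_eq t t' -> pf s t m =1 pf s' t' m.
Proof. by move=> h h' x; rewrite /pf h h'. Qed.

Add Parametric Morphism : (@ls_mul K) with signature
  (@ls_eq K) ==> (@ls_eq K) ==> (@ls_eq K) as ls_mul_mor.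
Proof.
move=> s s' h t t' h' m.
rewrite cf_mul_base (@cf_mul s' t' m (ls_top s) `|(ls_top s + ls_top t - m)%R|%N.+1).
  exact: wsum_ext (pf_ext m h h').
apply: supp_ext (pf_ext m h h') _.
apply: supp_pf; lia.
Qed.

Add Parametric Morphism : (@ls_sub K) with signature
  (@ls_eq K) ==> (@ls_eq K) ==> (@ls_eq K) as ls_sub_mor.
Proof. by move=> s s' h t t' h'; rewrite /ls_sub h h'. Qed.

Definition ls_zero : LS := MkLS 0 (fun _ => 0).

Lemma cf_zero m : cf ls_zero m = 0.
Proof. by rewrite /ls_coef; case: ifP. Qed.

Lemma cf_one m : cf (ls_one K) m = (m == 0)%:R.
Proof.
rewrite /ls_one cf_poly coefC.
have [->|hm] := eqVneq m 0; first by [].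
case: ifP => // h; rewrite ifF //; lia.
Qed.

Lemma wsum_rev F B N m :
  wsum F B N = wsum (fun x => F (m - x)) (m - B + N%:Z - 1) N.
Proof.
rewrite /wsum (reindex_inj rev_ord_inj) /=.
apply eq_bigr => i _; congr F; have := ltn_ord i; lia.
Qed.

Lemma ls_mulC (s t : LS) : ls_eq (ls_mul s t) (ls_mul t s).
Proof.
move=> m.
rewrite cf_mul_base (wsum_rev _ _ _ m).
set B := (m - _ + _ - 1).
rewrite (@cf_mul t s m B `|(ls_top s + ls_top t - m)%R|%N.+1).
  by apply wsum_ext => x; rewrite /pf mulrC; congr (cf _ _ * _); lia.
move=> x hx; rewrite /pf.
case: (boolP (x <= ls_top t)) => hxt.
  rewrite (@cf_top s) ?mulr0 //; rewrite /B in hx; lia.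
by rewrite cf_top ?mul0r //; lia.
Qed.

Lemma ls_mul1 (s : LS) : ls_eq (ls_mul (ls_one K) s) s.
Proof.
move=> m; rewrite (@cf_mul _ _ m 0 1).
  rewrite /wsum big_ord1 /pf cf_one (_ : (0 : int) - (nat_of_ord (@ord0 0))%:Z = 0) //.
  by rewrite eqxx mul1r subr0.
by move=> x hx; rewrite /pf cf_one (_ : (x == 0) = false) ?mul0r //; lia.
Qed.

Lemma ls_add0 (s : LS) : ls_eq (ls_add ls_zero s) s.
Proof. by move=> m; rewrite cf_add cf_zero add0r. Qed.
Lemma ls_addC (s t : LS) : ls_eq (ls_add s t) (ls_add t s).
Proof. by move=> m; rewrite !cf_add addrC. Qed.
Lemma ls_addA (s t u : LS) : ls_eq (ls_add s (ls_add t u)) (ls_add (ls_add s t) u).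
Proof. by move=> m; rewrite !cf_add addrA. Qed.
Lemma ls_addN (s : LS) : ls_eq (ls_add s (ls_opp s)) ls_zero.
Proof. by move=> m; rewrite cf_add cf_opp cf_zero subrr. Qed.

Lemma ls_mulDl (s t u : LS) :
  ls_eq (ls_mul (ls_add s t) u) (ls_add (ls_mul s u) (ls_mul t u)).
Proof.
move=> m; rewrite cf_add.
set B := Num.max (ls_top s) (ls_top t).
set N := `|(B + ls_top u - m)%R|%N.+1.
rewrite (@cf_mul _ _ m B N); last by apply: supp_pf => /=; lia.
rewrite (@cf_mul s u m B N); last by apply: supp_pf => /=; lia.
rewrite (@cf_mul t u m B N); last by apply: supp_pf => /=; lia.
by rewrite /wsum -big_split /=; apply eq_bigr => i _; rewrite /pf cf_add mulrDl.
Qed.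

Lemma ls_mulA (s t u : LS) :
  ls_eq (ls_mul s (ls_mul t u)) (ls_mul (ls_mul s t) u).
Proof.
move=> m.
set N := `|(ls_top s + ls_top t + ls_top u - m)%R|%N.+1.
rewrite (@cf_mul (ls_mul s t) u m (ls_top s + ls_top t) N); last first.
  by apply: supp_pf => /=; lia.
rewrite (@cf_mul s (ls_mul t u) m (ls_top s) N); last first.
  by apply: supp_pf => /=; lia.
rewrite /wsum /pf.
transitivity (\sum_(j < N) \sum_(i < N)
   cf s (ls_top s - j%:Z) * cf t (ls_top t + j%:Z - i%:Z) * cf u (m - ls_top s - ls_top t + i%:Z)).
  apply eq_bigr => j _.
  rewrite (@cf_mul t u _ (ls_top t + j%:Z) N); last first.
    by apply: supp_pf => /=; lia.
  rewrite /wsum /pf mulr_sumr; apply eq_bigr => i _.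
  by rewrite mulrA; congr (cf _ _ * cf _ _ * cf _ _); lia.
rewrite exchange_big; apply eq_bigr => i _.
rewrite (@cf_mul s t _ (ls_top s) N); last first.
  by apply: supp_pf => /=; have := ltn_ord i; lia.
rewrite /wsum /pf mulr_suml; apply eq_bigr => j _.
by congr (cf _ _ * cf _ _ * cf _ _); lia.
Qed.

Definition ls_rt : ring_theory ls_zero (ls_one K) (@ls_add K) (@ls_mul K)
  (@ls_sub K) (@ls_opp K) (@ls_eq K).
Proof.
constructor.
- exact: ls_add0.
- exact: ls_addC.
- exact: ls_addA.
- exact: ls_mul1.
- exact: ls_mulC.
- exact: ls_mulA.
- exact: ls_mulDl.
- by [].
- exact: ls_addN.
Qed.

Add Ring ls_ring : ls_rt.




Definition vanish (s : LS) (a : int) := forall m : int, a <= m -> cf s m = 0.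

Add Parametric Morphism : vanish with signature
  (@ls_eq K) ==> eq ==> iff as vanish_mor.
Proof. by move=> s s' h a; split=> H m hm; [rewrite -h | rewrite h]; apply: H. Qed.

Lemma vanish_mono (s : LS) (a b : int) : vanish s a -> a <= b -> vanish s b.
Proof. move=> H hab m hm; apply: H; lia. Qed.

Lemma vanish_add s t a : vanish s a -> vanish t a -> vanish (ls_add s t) a.
Proof. by move=> h1 h2 m hm; rewrite cf_add h1 ?h2 ?addr0. Qed.

Lemma vanish_opp s a : vanish s a -> vanish (ls_opp s) a.
Proof. by move=> h m hm; rewrite cf_opp h ?oppr0. Qed.

Lemma vanish_sub s t a : vanish s a -> vanish t a -> vanish (ls_sub s t) a.
Proof. by move=> h1 h2; apply: vanish_add => //; apply: vanish_opp. Qed.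

Lemma vanish_mul s t a b : vanish s a -> vanish t b -> vanish (ls_mul s t) (a + b - 1).
Proof.
move=> h1 h2 m hm; rewrite cf_mul_base /wsum big1 // => i _; rewrite /pf.
case: (boolP (a <= ls_top s - i%:Z)) => h.
  by rewrite h1 ?mul0r.
by rewrite h2 ?mulr0 //; lia.
Qed.

Lemma vanish_top s : vanish s (ls_top s + 1).
Proof. by move=> m hm; rewrite cf_top //; lia. Qed.

Lemma lsp_add (p q : {poly K}) : ls_eq (ls_poly (p + q)) (ls_add (ls_poly p) (ls_poly q)).
Proof. by move=> m; rewrite cf_add !cf_poly coefD; case: ifP; rewrite ?addr0. Qed.

Lemma lsp_opp (p : {poly K}) : ls_eq (ls_poly (- p)) (ls_opp (ls_poly p)).
Proof. by move=> m; rewrite cf_opp !cf_poly coefN; case: ifP; rewrite ?oppr0. Qed.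

Lemma lsp_sub (p q : {poly K}) : ls_eq (ls_poly (p - q)) (ls_sub (ls_poly p) (ls_poly q)).
Proof. by rewrite /ls_sub -lsp_opp -lsp_add. Qed.

Lemma lsp_one : ls_eq (ls_poly (1 : {poly K})) (ls_one K).
Proof. by []. Qed.

Lemma lsp_zero : ls_eq (ls_poly (0 : {poly K})) ls_zero.
Proof. by move=> m; rewrite cf_poly cf_zero coef0; case: ifP. Qed.

Lemma lsp_mul (p q : {poly K}) : ls_eq (ls_poly (p * q)) (ls_mul (ls_poly p) (ls_poly q)).
Proof.
move=> m; case: m => [k|k].
  rewrite (@cf_mul _ _ k k k.+1).
    rewrite cf_poly /= coefMr /wsum; apply eq_bigr => i _; rewrite /pf !cf_poly.
    have hi := ltn_ord i.
    rewrite ifT; last by lia. rewrite ifT; last by lia.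
    congr (_`_ _ * _`_ _); lia.
  move=> x hx; rewrite /pf !cf_poly.
  case: ifP => h1; last by rewrite mul0r.
  by rewrite ifF ?mulr0 //; lia.
rewrite cf_poly /= (@cf_mul _ _ _ 0 0); first by rewrite /wsum big_ord0.
move=> x hx; rewrite /pf !cf_poly.
case: ifP => h1; last by rewrite mul0r.
by rewrite ifF ?mulr0 //; lia.
Qed.

Lemma poly_van0 (p : {poly K}) : vanish (ls_poly p) 0 -> p = 0.
Proof.
move=> h; apply/polyP => i; rewrite coef0.
have hi : (0 <= i%:Z) by [].
have := h _ hi; rewrite cf_poly hi /=.
by move=> ->.
Qed.

Lemma lsp_inj (p q : {poly K}) : ls_eq (ls_poly p) (ls_poly q) -> p = q.
Proof.
move=> h; apply/eqP; rewrite -subr_eq0; apply/eqP; apply: poly_van0.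
rewrite lsp_sub h => m hm; rewrite cf_add cf_opp subrr //.
Qed.

Lemma vanish_poly (p : {poly K}) : vanish (ls_poly p) (size p)%:Z.
Proof. move=> m hm; rewrite cf_poly; case: ifP => // h; rewrite nth_default //. move: hm h. move: (size p) => k. lia. Qed.

Lemma floor_coef (s : LS) (p : {poly K}) m : vanish (ls_sub s (ls_poly p)) 0 -> 0 <= m ->
  cf s m = p`_`|m|%N.
Proof.
move=> h hm; have := h m hm; rewrite cf_add cf_opp cf_poly hm.
by move/eqP; rewrite subr_eq0 => /eqP.
Qed.

Lemma floor_uniq (s t : LS) (p q : {poly K}) : vanish (ls_sub s (ls_poly p)) 0 ->
  vanish (ls_sub t (ls_poly q)) 0 -> ls_eq s t -> p = q.
Proof.
move=> h1 h2 e; apply/polyP => i.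
by rewrite -(@floor_coef s p i%:Z) // -(@floor_coef t q i%:Z) // ?e.
Qed.


Definition sc (s : LS) (d : int) (i : nat) := cf s (d - i%:Z).

Fixpoint Ginv (s : LS) (d : int) (n : nat) : nat -> K :=
  match n with
  | 0 => fun _ => (sc s d 0)^-1
  | n'.+1 => fun k => if (k <= n')%N then Ginv s d n' k
            else - (sc s d 0)^-1 * \sum_(i < n'.+1) sc s d i.+1 * Ginv s d n' (n' - i)
  end.

Definition ls_inv (s : LS) (d : int) : LS := MkLS (- d) (fun n => Ginv s d n n).

Lemma Ginv_stable s d n k : (k <= n)%N -> Ginv s d n k = Ginv s d k k.
Proof.
elim: n => [|n IH] hk.
  by move: hk; rewrite leqn0 => /eqP ->.
rewrite /=; case: ifP => h; first exact: IH.
have -> : k = n.+1 by lia.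
by rewrite /= ltnn.
Qed.

Lemma Ginv_rec s d n : Ginv s d n.+1 n.+1 =
  - (sc s d 0)^-1 * \sum_(i < n.+1) sc s d i.+1 * Ginv s d (n - i) (n - i).
Proof.
rewrite /= ltnn; congr (_ * _); apply eq_bigr => i _.
by rewrite Ginv_stable // leq_subr.
Qed.

Lemma ls_inv_spec (s : LS) (d : int) : cf s d != 0 -> vanish s (d + 1) ->
  ls_eq (ls_mul s (ls_inv s d)) (ls_one K).
Proof.
move=> hc hv m.
case: (boolP (0 < m)) => hm.
  rewrite cf_one (_ : (m == 0) = false); last by lia.
  apply: (@vanish_mul s (ls_inv s d) (d + 1) (- d + 1)) => //; last by lia.
  exact: vanish_top.
set n := `|m|%N.
have hmn : m = - n%:Z by rewrite /n; lia.
rewrite (@cf_mul _ _ m d n.+1); last first.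
  move=> x hx; rewrite /pf.
  case: (boolP (x <= d)) => hxd.
    by rewrite (@cf_top (ls_inv s d)) ?mulr0 //= ; lia.
  by rewrite hv ?mul0r //; lia.
have hsum : wsum (pf s (ls_inv s d) m) d n.+1 =
    \sum_(i < n.+1) sc s d i * Ginv s d (n - i) (n - i).
  apply eq_bigr => i _; rewrite /pf /sc; congr (_ * _).
  have hi := ltn_ord i.
  transitivity (ls_g (ls_inv s d) (n - i)); last by [].
  rewrite -cf_g /=; congr (ls_coef _ _); lia.
rewrite hsum cf_one.
have hd0 : sc s d 0 != 0 by rewrite /sc (_ : d - 0%:Z = d) //; lia.
case: n hmn hsum => [|n] hmn hsum.
  by rewrite big_ord1 /= mulfV // hmn.
rewrite big_ord_recl Ginv_rec.
rewrite (_ : (m == 0) = false); last by lia.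
have -> : \sum_(i < n.+1) sc s d (lift ord0 i) * Ginv s d (n.+1 - lift ord0 i) (n.+1 - lift ord0 i)
   = \sum_(i < n.+1) sc s d i.+1 * Ginv s d (n - i) (n - i) by apply eq_bigr.
by rewrite mulrA mulrN (_ : sc s d ord0 = sc s d 0) // mulfV // mulN1r addNr.
Qed.


Lemma conv (x y : nat -> LS) (b : nat -> {poly K}) :
  (forall n, vanish (ls_sub (x n) (ls_poly (b n))) 0) ->
  (forall n, vanish (ls_sub (y n) (ls_poly (b n))) 0) ->
  (forall n, ls_eq (ls_mul (ls_sub (x n) (ls_poly (b n))) (x n.+1)) (ls_one K)) ->
  (forall n, ls_eq (ls_mul (ls_sub (y n) (ls_poly (b n))) (y n.+1)) (ls_one K)) ->
  ls_eq (x 0%N) (y 0%N).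
Proof.
move=> hx hy ex ey.
have key : forall (k : nat) n, vanish (ls_sub (x n) (y n)) (1 - 2 * k%:Z).
  elim=> [|k IH] n.
    have e : ls_eq (ls_sub (x n) (y n))
      (ls_sub (ls_sub (x n) (ls_poly (b n))) (ls_sub (y n) (ls_poly (b n)))) by ring.
    rewrite e; apply: vanish_mono (vanish_sub (hx n) (hy n)) _; lia.
  have e : ls_eq (ls_sub (x n) (y n))
     (ls_mul (ls_mul (ls_sub (x n) (ls_poly (b n))) (ls_sub (y n) (ls_poly (b n))))
        (ls_opp (ls_sub (x n.+1) (y n.+1)))).
    transitivity (ls_sub (ls_mul (ls_sub (x n) (ls_poly (b n))) (ls_one K))
                         (ls_mul (ls_sub (y n) (ls_poly (b n))) (ls_one K))); first by ring.
    rewrite -{1}(ey n) -(ex n); ring.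
  rewrite e; apply: vanish_mono (vanish_mul (vanish_mul (hx n) (hy n)) (vanish_opp (IH n.+1))) _.
  lia.
move=> m; have := key `|(1 - m)%R|%N 0%N m; rewrite cf_add cf_opp => h.
by apply/eqP; rewrite -subr_eq0 h //; lia.
Qed.


Lemma sq_lemma (D X Y : {poly K}) : Y != 0 -> Y * Y * D = X * X ->
  exists p, D = p * p.
Proof.
move=> hY e.
set g := gcdp X Y.
have hg : g != 0 by rewrite /g gcdp_eq0 negb_and hY orbT.
set X' := X %/ g. set Y' := Y %/ g.
have eX : X = X' * g by rewrite /X' divpK // dvdp_gcdl.
have eY : Y = Y' * g by rewrite /Y' divpK // dvdp_gcdr.
have cop : coprimep X' Y' by apply: coprimep_div_gcd; rewrite hY orbT.
have e' : Y' * Y' * D = X' * X'.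
  apply: (@mulIf _ (g * g)); first by rewrite mulf_neq0.
  have : Y' * g * (Y' * g) * D = X' * g * (X' * g) by rewrite -eX -eY.
  by move=> h; rewrite mulrAC mulrACA [RHS]mulrACA.
have dv : Y' %| X' * X' by rewrite -e' -mulrA dvdp_mulIl.
have : Y' %| X' by rewrite -(@Gauss_dvdpl _ X' X' Y') // coprimep_sym.
move=> dv'.
have : coprimep Y' Y' by apply: (coprimep_dvdl dv'); rewrite coprimep_sym.
rewrite coprimepp => /size_poly1P [k hk eY'].
exists (k^-1 *: X').
by rewrite -scalerAl -scalerAr scalerA -e' eY' -!mul_polyC !mulrA -!polyCM divfK // mulVf // polyC1 mul1r.
Qed.


Definition ls_c (c : K) : LS := ls_poly c%:P.

Lemma vanish_c c : vanish (ls_c c) 1.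
Proof.
rewrite /ls_c; apply: (vanish_mono (@vanish_poly c%:P)).
have := size_polyC_leq1 c; move: (size c%:P) => k; lia.
Qed.

Lemma lsp_scale c (p : {poly K}) : ls_eq (ls_poly (c *: p)) (ls_mul (ls_c c) (ls_poly p)).
Proof. by rewrite -mul_polyC lsp_mul. Qed.

Lemma ls_cM c c' : ls_eq (ls_mul (ls_c c) (ls_c c')) (ls_c (c * c')).
Proof. by rewrite /ls_c polyCM lsp_mul. Qed.

Lemma ls_c1 : ls_eq (ls_c 1) (ls_one K).
Proof. by []. Qed.

Lemma cancel_poly (r : {poly K}) (s : LS) : r != 0 ->
  ls_eq (ls_mul (ls_poly r) s) ls_zero -> ls_eq s ls_zero.
Proof.
move=> hr e.
set d := ((size r).-1)%:Z.
have hs : (0 < size r)%N by rewrite size_poly_gt0.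
have hI := @ls_inv_spec (ls_poly r) d.
have h1 : cf (ls_poly r) d != 0.
  rewrite cf_poly /d /= -lead_coefE lead_coef_eq0 //.
have h2 : vanish (ls_poly r) (d + 1).
  apply: (vanish_mono (@vanish_poly r)); rewrite /d; move: hs; move: (size r) => k; lia.
have E := hI h1 h2.
transitivity (ls_mul (ls_mul (ls_poly r) (ls_inv (ls_poly r) d)) s).
  by rewrite E; ring.
transitivity (ls_mul (ls_inv (ls_poly r) d) (ls_mul (ls_poly r) s)); first by ring.
by rewrite e; ring.
Qed.

Lemma nonsq (D X Y : {poly K}) (sD : LS) : ~ (exists p, D = p * p) ->
  ls_eq (ls_mul sD sD) (ls_poly D) ->
  ls_eq (ls_add (ls_poly X) (ls_mul (ls_poly Y) sD)) ls_zero -> X = 0 /\ Y = 0.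
Proof.
move=> hD hs E.
have EX : ls_eq (ls_poly X) (ls_opp (ls_mul (ls_poly Y) sD)).
  transitivity (ls_sub (ls_add (ls_poly X) (ls_mul (ls_poly Y) sD)) (ls_mul (ls_poly Y) sD)).
    by ring.
  by rewrite E; ring.
have hY : Y = 0.
  apply/eqP; apply/negPn/negP => hY; apply: hD.
  apply: (@sq_lemma D X Y hY); apply: lsp_inj.
  rewrite !lsp_mul EX -hs; ring.
split => //; apply: lsp_inj; rewrite lsp_zero.
transitivity (ls_add (ls_poly X) (ls_mul (ls_poly Y) sD)); last exact: E.
by rewrite hY lsp_zero; ring.
Qed.

Fixpoint sig (beta : LS) (a : nat -> {poly K}) (n : nat) : LS :=
  match n with
  | 0 => beta
  | n'.+1 => ls_inv (ls_sub (sig beta a n') (ls_poly (a n'))) ((size (a n')).-1)%:Z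
  end.

Lemma sig_step (beta : LS) (a : nat -> {poly K}) n : vanish (sig beta a n) 0 ->
  (1 < size (a n))%N ->
  ls_eq (ls_mul (ls_sub (sig beta a n) (ls_poly (a n))) (sig beta a n.+1)) (ls_one K) /\
  vanish (sig beta a n.+1) 0.
Proof.
move=> hv ha.
set s := ls_sub (sig beta a n) (ls_poly (a n)).
set d := ((size (a n)).-1)%:Z.
have h1 : cf s d != 0.
  rewrite /s cf_add cf_opp hv; last by rewrite /d.
  rewrite cf_poly /d /= -lead_coefE sub0r oppr_eq0 lead_coef_eq0 -size_poly_gt0.
  by move: ha; move: (size (a n)) => k; lia.
have h2 : vanish s (d + 1).
  apply: vanish_sub.
    by apply: (vanish_mono hv); rewrite /d; move: ha; move: (size (a n)) => k; lia.
  by apply: (vanish_mono (@vanish_poly (a n))); rewrite /d; move: ha; move: (size (a n)) => k; lia.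
split; first exact: ls_inv_spec.
rewrite /=; apply: (vanish_mono (@vanish_top (ls_inv s d))) => /=.
by rewrite /d; move: ha; move: (size (a n)) => k; lia.
Qed.

Lemma sig_spec (beta : LS) (a : nat -> {poly K}) : vanish beta 0 ->
  (forall n, (1 < size (a n))%N) -> forall n,
  vanish (sig beta a n) 0 /\
  ls_eq (ls_mul (ls_sub (sig beta a n) (ls_poly (a n))) (sig beta a n.+1)) (ls_one K).
Proof.
move=> hb ha; elim=> [|n [IH _]].
  by split=> //; case: (@sig_step beta a 0%N hb (ha 0%N)).
have [_ hv] := sig_step IH (ha n).
by split=> //; case: (sig_step hv (ha n.+1)).
Qed.


Ltac lsp := repeat first [rewrite lsp_sub | rewrite lsp_mul | rewrite lsp_add
   | rewrite lsp_opp | rewrite lsp_scale].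

Definition cc (mu : K) (n : nat) := if odd n then mu^-1 else mu.

Lemma ccS mu n : mu != 0 -> cc mu n * cc mu n.+1 = 1.
Proof. by move=> h; rewrite /cc /=; case: (odd n) => /=; rewrite ?mulVf ?mulfV. Qed.

Lemma ccS' mu n : mu != 0 -> cc mu n.+1 * cc mu n = 1.
Proof. by move=> h; rewrite mulrC ccS. Qed.

Lemma lsc_inv c c' : c * c' = 1 -> ls_eq (ls_mul (ls_c c) (ls_c c')) (ls_one K).
Proof. by move=> h; rewrite ls_cM h. Qed.

Lemma floor_size (s : LS) (p : {poly K}) : vanish (ls_sub s (ls_poly p)) 0 ->
  (exists k : int, 0 < k /\ cf s k != 0) -> (1 < size p)%N.
Proof.
move=> hv [k [hk hc]]; rewrite (floor_coef hv) in hc; last by lia.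
have : (`|k| < size p)%N.
  by rewrite ltnNge; apply/negP => hh; move: hc; rewrite nth_default // eqxx.
by move: (size p) => n; lia.
Qed.

Lemma triple_step (sD : LS) (D : {poly K}) (An An1 sn sn1 : LS) (an P Q R : {poly K}) :
  ls_eq (ls_mul sD sD) (ls_poly D) ->
  R != 0 ->
  ls_eq (ls_mul (ls_poly R) An) (ls_add (ls_poly P) (ls_mul (ls_poly Q) sD)) ->
  ls_eq (ls_mul (ls_poly R) sn) (ls_sub (ls_poly P) (ls_mul (ls_poly Q) sD)) ->
  ls_eq (ls_mul (ls_sub An (ls_poly an)) An1) (ls_one K) ->
  ls_eq (ls_mul (ls_sub sn (ls_poly an)) sn1) (ls_one K) ->
  exists P' Q' R' : {poly K}, R' != 0 /\
    ls_eq (ls_mul (ls_poly R') An1) (ls_add (ls_poly P') (ls_mul (ls_poly Q') sD)) /\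
    ls_eq (ls_mul (ls_poly R') sn1) (ls_sub (ls_poly P') (ls_mul (ls_poly Q') sD)).
Proof.
move=> hs hR eA es hA hsn.
set U := ls_add (ls_poly (P - R * an)) (ls_mul (ls_poly Q) sD).
set V := ls_sub (ls_poly (P - R * an)) (ls_mul (ls_poly Q) sD).
have hU : ls_eq (ls_mul U An1) (ls_poly R).
  transitivity (ls_mul (ls_poly R) (ls_mul (ls_sub An (ls_poly an)) An1)); last first.
    by rewrite hA; ring.
  transitivity (ls_mul (ls_sub (ls_mul (ls_poly R) An) (ls_mul (ls_poly R) (ls_poly an))) An1);
    last by ring.
  rewrite eA /U; lsp; ring.
have hV : ls_eq (ls_mul V sn1) (ls_poly R).
  transitivity (ls_mul (ls_poly R) (ls_mul (ls_sub sn (ls_poly an)) sn1)); last first.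
    by rewrite hsn; ring.
  transitivity (ls_mul (ls_sub (ls_mul (ls_poly R) sn) (ls_mul (ls_poly R) (ls_poly an))) sn1);
    last by ring.
  rewrite es /V; lsp; ring.
set N := (P - R * an) * (P - R * an) - Q * Q * D.
have hN : ls_eq (ls_poly N) (ls_mul U V).
  rewrite /N /U /V; lsp; rewrite -hs; ring.
exists (R * (P - R * an)), (- (R * Q)), N; split; [|split].
- apply/negP => /eqP hN0.
  have : R * R = 0.
    apply: lsp_inj; rewrite lsp_mul lsp_zero.
    transitivity (ls_mul (ls_mul U An1) (ls_mul V sn1)); first by rewrite hU hV.
    transitivity (ls_mul (ls_mul U V) (ls_mul An1 sn1)); first by ring.
    by rewrite -hN hN0 lsp_zero; ring.
  by move/eqP; rewrite mulf_eq0 orbb (negbTE hR).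
- transitivity (ls_mul V (ls_mul U An1)); first by rewrite hN; ring.
  rewrite hU /V; lsp; ring.
- transitivity (ls_mul U (ls_mul V sn1)); first by rewrite hN; ring.
  rewrite hV /U; lsp; ring.
Qed.


Lemma back_step (sg : nat -> LS) (a : nat -> {poly K}) (l n : nat) (c c' : K) :
  c * c' = 1 ->
  (forall j, vanish (sg j) 0) ->
  (forall j, ls_eq (ls_mul (ls_sub (sg j) (ls_poly (a j))) (sg j.+1)) (ls_one K)) ->
  ls_eq (sg n.+1) (ls_mul (ls_c c) (sg ((n + l)%N).+1)) ->
  a n = c' *: a (n + l)%N /\ ls_eq (sg n) (ls_mul (ls_c c') (sg (n + l)%N)).
Proof.
move=> hc hv hsg hyp.
have e1 := hsg n; have e2 := hsg (n + l)%N.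
rewrite hyp in e1.
set u := ls_sub (sg n) (ls_poly (a n)) in e1.
set w := ls_sub (sg (n + l)%N) (ls_poly (a (n + l)%N)) in e2.
set s2 := sg ((n + l)%N).+1 in e1 e2.
set W := ls_sub (ls_mul (ls_c c) u) w.
have WZ : ls_eq W ls_zero.
  transitivity (ls_mul W (ls_mul w s2)); first by rewrite e2; ring.
  transitivity (ls_mul w (ls_sub (ls_mul u (ls_mul (ls_c c) s2)) (ls_mul w s2)));
    first by rewrite /W; ring.
  by rewrite e1 e2; ring.
have Z : ls_eq (ls_sub (ls_mul (ls_c c) (sg n)) (sg (n + l)%N)) (ls_poly (c *: a n - a (n + l)%N)).
  transitivity (ls_sub (ls_sub (ls_mul (ls_c c) (sg n)) (sg (n + l)%N)) W); first by rewrite WZ; ring.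
  by rewrite /W /u /w; lsp; ring.
have hc' : c' * c = 1 by rewrite mulrC.
have P0 : c *: a n - a (n + l)%N = 0.
  apply: poly_van0; rewrite -Z.
  apply: vanish_sub; last exact: hv.
  by apply: (vanish_mono (vanish_mul (vanish_c c) (hv n))).
split.
  move/eqP: P0; rewrite subr_eq0 => /eqP <-.
  by rewrite scalerA hc' scale1r.
rewrite P0 lsp_zero in Z.
transitivity (ls_mul (ls_mul (ls_c c') (ls_c c)) (sg n)); first by rewrite lsc_inv //; ring.
transitivity (ls_add (ls_mul (ls_c c') (ls_sub (ls_mul (ls_c c) (sg n)) (sg (n + l)%N)))
   (ls_mul (ls_c c') (sg (n + l)%N))); first by ring.
by rewrite Z; ring.
Qed.

Lemma quasi_val (A : nat -> LS) (a : nat -> {poly K}) (mu : K) (m l : nat) :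
  mu != 0 ->
  (forall n, vanish (ls_sub (A n) (ls_poly (a n))) 0) ->
  (forall n, ls_eq (ls_mul (ls_sub (A n) (ls_poly (a n))) (A n.+1)) (ls_one K)) ->
  (forall n, (m <= n)%N -> a n = cc mu n *: a (n + l)%N) ->
  forall n, (m <= n)%N -> ls_eq (A n) (ls_mul (ls_c (cc mu n)) (A (n + l)%N)).
Proof.
move=> hmu hfl hcf hq n hn.
have E : forall k, ls_eq (ls_sub (ls_mul (ls_c (cc mu (n + k))) (A (n + k + l)%N)) (ls_poly (a (n + k)%N)))
   (ls_mul (ls_c (cc mu (n + k))) (ls_sub (A (n + k + l)%N) (ls_poly (a (n + k + l)%N)))).
  move=> k; rewrite {1}(hq (n + k)%N); last by lia.
  by rewrite lsp_scale; ring.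
have := @conv (fun k => A (n + k)%N) (fun k => ls_mul (ls_c (cc mu (n + k))) (A (n + k + l)%N))
   (fun k => a (n + k)%N).
rewrite !addn0; apply.
- by move=> k; exact: hfl.
- move=> k; rewrite E.
  by apply: (vanish_mono (vanish_mul (vanish_c _) (hfl _))).
- by move=> k; rewrite addnS; exact: hcf.
- move=> k; rewrite E addnS addSn.
  transitivity (ls_mul (ls_mul (ls_c (cc mu (n + k))) (ls_c (cc mu (n + k).+1)))
     (ls_mul (ls_sub (A (n + k + l)%N) (ls_poly (a (n + k + l)%N))) (A ((n + k + l)%N).+1)));
    first by ring.
  by rewrite lsc_inv ?ccS // hcf; ring.
Qed.


Lemma sym_claim (A sg : nat -> LS) (a : nat -> {poly K}) (mu : K) (l : nat) :
  mu != 0 -> (0 < l)%N ->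
  (forall n, vanish (ls_sub (A n) (ls_poly (a n))) 0) ->
  (forall n, ls_eq (ls_mul (ls_sub (A n) (ls_poly (a n))) (A n.+1)) (ls_one K)) ->
  (forall j, vanish (sg j) 0) ->
  (forall j, ls_eq (ls_mul (ls_sub (sg j) (ls_poly (a j))) (sg j.+1)) (ls_one K)) ->
  ls_eq (sg 0%N) (ls_sub (ls_poly (a 0%N)) (A 0%N)) ->
  ls_eq (sg 0%N) (ls_mul (ls_c mu) (sg l)) ->
  forall k, (k < l)%N ->
  ls_eq (ls_sub (ls_poly (a (l - k.+1)%N)) (sg (l - k.+1)%N)) (ls_mul (ls_c (cc mu k)) (A k.+1)).
Proof.
move=> hmu hl hfl hA hv hsg h0 hmu0.
elim=> [|k IH] hk.
  have ej : (l - 1).+1 = l by lia.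
  have e := hsg (l - 1)%N; rewrite ej in e.
  have E : ls_eq (ls_sub (A 0%N) (ls_poly (a 0%N))) (ls_opp (ls_mul (ls_c mu) (sg l))).
    by rewrite -hmu0 h0; ring.
  set B := ls_sub (ls_poly (a (l - 1)%N)) (sg (l - 1)%N).
  transitivity (ls_mul B (ls_mul (ls_sub (A 0%N) (ls_poly (a 0%N))) (A 1%N))); first by rewrite hA; ring.
  rewrite E.
  transitivity (ls_mul (ls_mul (ls_c mu) (A 1%N))
    (ls_mul (ls_sub (sg (l - 1)%N) (ls_poly (a (l - 1)%N))) (sg l))); first by rewrite /B; ring.
  by rewrite e /cc /=; ring.
have ej : (l - k.+2).+1 = (l - k.+1)%N by lia.
have IH' := IH (ltnW hk); rewrite -ej in IH'.
set j := (l - k.+2)%N in ej IH' *.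
set c := cc mu k in IH' *.
have hpoly : a j.+1 = c *: a k.+1.
  apply/eqP; rewrite -subr_eq0; apply/eqP; apply: poly_van0.
  have -> : ls_eq (ls_poly (a j.+1 - c *: a k.+1))
     (ls_add (sg j.+1) (ls_mul (ls_c c) (ls_sub (A k.+1) (ls_poly (a k.+1))))).
    transitivity (ls_add (ls_sub (ls_sub (ls_poly (a j.+1)) (sg j.+1)) (ls_mul (ls_c c) (A k.+1)))
      (ls_add (sg j.+1) (ls_mul (ls_c c) (ls_sub (A k.+1) (ls_poly (a k.+1)))))).
      by lsp; ring.
    by rewrite IH'; ring.
  apply: vanish_add; first exact: hv.
  exact: (vanish_mono (vanish_mul (vanish_c c) (hfl k.+1))).
have hs' : ls_eq (sg j.+1) (ls_opp (ls_mul (ls_c c) (ls_sub (A k.+1) (ls_poly (a k.+1))))).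
  transitivity (ls_sub (ls_poly (a j.+1)) (ls_sub (ls_poly (a j.+1)) (sg j.+1))); first by ring.
  by rewrite IH' hpoly lsp_scale; ring.
have hcc : cc mu k.+1 * c = 1 by rewrite /c ccS'.
transitivity (ls_mul (ls_mul (ls_mul (ls_c (cc mu k.+1)) (ls_c c)) (ls_sub (ls_poly (a j)) (sg j)))
   (ls_mul (ls_sub (A k.+1) (ls_poly (a k.+1))) (A k.+2))).
  by rewrite (lsc_inv hcc) (hA k.+1); ring.
transitivity (ls_mul (ls_mul (ls_c (cc mu k.+1)) (A k.+2))
   (ls_mul (ls_sub (sg j) (ls_poly (a j)))
      (ls_opp (ls_mul (ls_c c) (ls_sub (A k.+1) (ls_poly (a k.+1))))))); first by ring.
by rewrite -hs' (hsg j); ring.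
Qed.


Lemma main_aux (D : {poly K}) (sqrtD alpha : LS) (A : nat -> LS) (a : nat -> {poly K}) :
  ~ (exists p : {poly K}, D = p * p) ->
  ls_eq (ls_mul sqrtD sqrtD) (ls_poly D) ->
  (exists beta : LS, sigma_conj sqrtD alpha beta /\ (ord_pos beta /\ ord_neg alpha) /\
      ls_is_poly (ls_add alpha beta)) ->
  cf_expansion alpha A a -> quasi_periodic a -> pure_periodic a.
Proof.
move=> hD hs [beta [[p [q [r [hr [ea eb]]]]] [[hbpos hneg] [P0 hP0]]]] [hA0 [hfl hcf]]
  [m [l [mu [hl [hmu hq]]]]].
have hfl' : forall n, vanish (ls_sub (A n) (ls_poly (a n))) 0 := hfl.
have hb : vanish beta 0 := hbpos.
have ha : forall n, (1 < size (a n))%N.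
  case=> [|n].
    apply: (floor_size (hfl' 0%N)).
    by case: hneg => k [hk hc]; exists k; split=> //; rewrite hA0.
  apply: (floor_size (hfl' n.+1)).
  apply: NNPP => hno.
  have hvan : vanish (A n.+1) 1.
    move=> k hk; apply/eqP; apply: contraT => hc; exfalso; apply: hno; exists k; split => //; lia.
  have hv := vanish_mul (hfl' n) hvan.
  rewrite (hcf n) in hv.
  have h1 := hv 0 (ltac:(by [])).
  by move: h1; rewrite cf_one eqxx /= => /eqP; rewrite oner_eq0.
pose sg := sig beta a.
have hsg := sig_spec hb ha.
have hv : forall n, vanish (sg n) 0 by move=> n; case: (hsg n).
have hsc : forall n, ls_eq (ls_mul (ls_sub (sg n) (ls_poly (a n))) (sg n.+1)) (ls_one K).
  by move=> n; case: (hsg n).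
have trip : forall n, exists P Q R : {poly K}, R != 0 /\
    ls_eq (ls_mul (ls_poly R) (A n)) (ls_add (ls_poly P) (ls_mul (ls_poly Q) sqrtD)) /\
    ls_eq (ls_mul (ls_poly R) (sg n)) (ls_sub (ls_poly P) (ls_mul (ls_poly Q) sqrtD)).
  elim=> [|n [P [Q [R [hR [eA es]]]]]].
    by exists p, q, r; split=> //; split; [rewrite hA0 | exact: eb].
  exact: (triple_step hs hR eA es (hcf n) (hsc n)).
have hq' : forall n, (m <= n)%N -> a n = cc mu n *: a (n + l)%N := hq.
have hAq := quasi_val hmu hfl' hcf hq'.
have hsm : ls_eq (sg m) (ls_mul (ls_c (cc mu m)) (sg (m + l)%N)).
  have [P1 [Q1 [R1 [hR1 [eA1 es1]]]]] := trip m.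
  have [P2 [Q2 [R2 [hR2 [eA2 es2]]]]] := trip (m + l)%N.
  set c := cc mu m.
  have [hX hY] : (R2 * P1 - c%:P * R1 * P2 = 0) /\ (R2 * Q1 - c%:P * R1 * Q2 = 0).
    apply: (nonsq hD hs).
    transitivity (ls_sub (ls_mul (ls_poly R2) (ls_add (ls_poly P1) (ls_mul (ls_poly Q1) sqrtD)))
      (ls_mul (ls_mul (ls_c c) (ls_poly R1)) (ls_add (ls_poly P2) (ls_mul (ls_poly Q2) sqrtD)))).
      by lsp; rewrite -/(ls_c c); ring.
    by rewrite -eA1 -eA2 (hAq m (leqnn m)) -/c; ring.
  suff Z : ls_eq (ls_sub (sg m) (ls_mul (ls_c c) (sg (m + l)%N))) ls_zero.
    transitivity (ls_add (ls_sub (sg m) (ls_mul (ls_c c) (sg (m + l)%N)))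
       (ls_mul (ls_c c) (sg (m + l)%N))); first by ring.
    by rewrite Z; ring.
  apply: (@cancel_poly (R1 * R2)); first by rewrite mulf_neq0.
  transitivity (ls_sub (ls_mul (ls_poly R2) (ls_mul (ls_poly R1) (sg m)))
     (ls_mul (ls_mul (ls_c c) (ls_poly R1)) (ls_mul (ls_poly R2) (sg (m + l)%N)))).
    by rewrite lsp_mul; ring.
  rewrite es1 es2.
  transitivity (ls_sub (ls_poly (R2 * P1 - c%:P * R1 * P2))
     (ls_mul (ls_poly (R2 * Q1 - c%:P * R1 * Q2)) sqrtD)); first by lsp; rewrite -/(ls_c c); ring.
  by rewrite hX hY lsp_zero; ring.
have back : forall k, (k <= m)%N ->
    ls_eq (sg (m - k)%N) (ls_mul (ls_c (cc mu (m - k))) (sg (m - k + l)%N)) /\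
    forall n, (m - k <= n)%N -> a n = cc mu n *: a (n + l)%N.
  elim=> [|k IH] hk.
    by rewrite subn0; split.
  have [IHs IHa] := IH (ltnW hk).
  have em : (m - k)%N = (m - k.+1).+1 by lia.
  rewrite em addSn in IHs.
  have [ha' hs'] := back_step (ccS' (m - k.+1) hmu) hv hsc IHs.
  split => // n hn.
  have [->|hne] := eqVneq n (m - k.+1)%N; first exact: ha'.
  by apply: IHa; lia.
have [h0 hall] := back m (leqnn m).
rewrite subnn add0n in h0.
have qa : forall n, a n = cc mu n *: a (n + l)%N.
  by move=> n; apply: hall; rewrite subnn.
have hcc : forall n, cc mu n * cc mu (n + l)%N = 1.
  case: (boolP (odd l)) => hlo.
    by move=> n; rewrite /cc oddD hlo; case: (odd n) => /=; rewrite ?mulVf ?mulfV.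
  have hP0a : P0 = a 0%N.
    apply/eqP; rewrite -subr_eq0; apply/eqP; apply: poly_van0.
    have -> : ls_eq (ls_poly (P0 - a 0%N)) (ls_add (ls_sub (A 0%N) (ls_poly (a 0%N))) beta).
      by rewrite lsp_sub -hP0 hA0; ring.
    exact: vanish_add (hfl' 0%N) hb.
  have hs0 : ls_eq (sg 0%N) (ls_sub (ls_poly (a 0%N)) (A 0%N)).
    by rewrite /sg /= -hP0a -hP0 hA0; ring.
  have hl1 : (l.-1 < l)%N by lia.
  have hcl := sym_claim hmu hl hfl' hcf hv hsc hs0 h0 hl1.
  have e1 : (l - l.-1.+1)%N = 0%N by lia.
  have e2 : l.-1.+1 = l by lia.
  rewrite e1 e2 in hcl.
  have ea0 : a 0%N = cc mu l.-1 *: a l.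
    apply: (floor_uniq (hfl' 0%N) _ (t := ls_mul (ls_c (cc mu l.-1)) (A l))).
      have -> : ls_eq (ls_sub (ls_mul (ls_c (cc mu l.-1)) (A l)) (ls_poly (cc mu l.-1 *: a l)))
         (ls_mul (ls_c (cc mu l.-1)) (ls_sub (A l) (ls_poly (a l)))).
        by rewrite lsp_scale; ring.
      exact: (vanish_mono (vanish_mul (vanish_c _) (hfl' l))).
    by rewrite -hcl hs0; ring.
  have hodd : odd l.-1 by move: hlo; case: l hl {hl1 e1 e2 hcl ea0 hq hq' hAq hsm back hall qa h0} => // l' _ /=; rewrite negbK.
  have emu : mu = mu^-1.
    move: ea0; rewrite {1}qa /cc hodd add0n /=.
    move/eqP; rewrite -subr_eq0 -scalerBl scaler_eq0 subr_eq0 => /orP [/eqP //|].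
    by move=> hal; move: (ha l); rewrite (eqP hal) size_poly0.
  move=> n; rewrite /cc oddD (negbTE hlo) addbF.
  have mm : mu * mu = 1 by rewrite {1}emu mulVf.
  by case: (odd n); rewrite -?emu.
exists (l + l)%N; split; first lia.
move=> n; rewrite (qa n) (qa (n + l)%N) scalerA hcc scale1r addnA //.
Qed.

End LSTheory.

Unset Implicit Arguments.

Theorem mainTheorem13 (K : fieldType) (D : {poly K}) (sqrtD alpha : LS K)
    (A : nat -> LS K) (a : nat -> {poly K}) :
  (2%:R : K) != 0 ->
  ~ (exists p : {poly K}, D = p * p) ->
  ~~ odd (size D).-1 ->
  (exists c : K, lead_coef D = c * c) ->
  ls_eq (ls_mul sqrtD sqrtD) (ls_poly D) ->
  (exists beta : LS K,
      sigma_conj sqrtD alpha beta /\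
      (ord_pos beta /\ ord_neg alpha) /\
      ls_is_poly (ls_add alpha beta)) ->
  cf_expansion alpha A a ->
  quasi_periodic a ->
  pure_periodic a.
Proof.
move=> _ hD _ _ hs hb hcf hq.
exact: (main_aux hD hs hb hcf hq).
Qed.
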